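(* Let $a,b\in\mathbb{N}$ with $b\le a$. Then there exist $n,k\in\mathbb{N}$ with $k\le n$ such that for every 2-coloring of the edges of $B_{n,k}$, there exists an induced monochromatic copy of $B_{a,b}$ in $B_{n,k}$; that is, there is a set $V'$ of vertices of $B_{n,k}$ such that the induced subgraph of $B_{n,k}$ on $V'$ is isomorphic to $B_{a,b}$ and all of its edges receive the same color.
   Context: For $n\in\mathbb{N}$, $[n]=\{1,\dots,n\}$, and for a set $X$, $\binom{X}{k}$ denotes the set of $k$-element subsets of $X$. For $k\le n$, $B_{n,k}$ is the bipartite graph with left vertex set $[n]$, right vertex set $\binom{[n]}{k}$, and edge set $\{(x,X)\in[n]\times\binom{[n]}{k} : x\in X\}$. For a graph $H=(V,E)$ and $V'\subseteq V$, the induced subgraph on $V'$ has vertex set $V'$ and edge set consisting of all edges of $H$ with both endpoints in $V'$. A 2-coloring of the edges is a map from the edge set to a 2-element set of colors. *)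

(* Defs.v *)
From mathcomp Require Import all_boot.
Set Implicit Arguments. Unset Strict Implicit. Unset Printing Implicit Defensive.

(* [n] is represented by 'I_n (elements 0..n-1). *)

Definition ksub (n k : nat) := {X : {set 'I_n} | #|X| == k}.

Definition Bvert (n k : nat) := ('I_n + ksub n k)%type.

Definition Badj (n k : nat) (u v : Bvert n k) : bool :=
  match u, v with
  | inl x, inr X => x \in val X
  | inr X, inl x => x \in val X
  | _, _ => false
  end.

Definition Bedge (n k : nat) := {p : 'I_n * ksub n k | p.1 \in val p.2}.

Definition edge_l (n k : nat) (e : Bedge n k) : Bvert n k := inl (val e).1.
Definition edge_r (n k : nat) (e : Bedge n k) : Bvert n k := inr (val e).2.

Definition coloring (n k : nat) := Bedge n k -> bool.

Definition induced_copy (a b n k : nat) (V' : {set Bvert n k}) : Prop :=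
  exists f : Bvert a b -> Bvert n k,
    [/\ injective f,
        forall v, v \in V' <-> exists u, f u = v
      & forall u w, Badj (f u) (f w) = Badj u w].

Definition monochromatic (n k : nat) (c : coloring n k) (V' : {set Bvert n k}) : Prop :=
  exists col : bool, forall e : Bedge n k,
    edge_l e \in V' -> edge_r e \in V' -> c e = col.

(* Main.v *)
Require Import Defs.
From mathcomp Require Import all_boot zify.
Set Implicit Arguments. Unset Strict Implicit. Unset Printing Implicit Defensive.
Lemma sum_count_size (C : finType) (s : seq C) :
  \sum_(i : C) count_mem i s = size s.
Proof.
elim: s => [|x s IH] /=; first by rewrite big1.
rewrite big_split /= IH (bigD1 x) //= eqxx big1 ?addn0 ?add1n // => i /negbTE.
by rewrite eq_sym => ->.
Qed.

Lemma pigeon (C : finType) (s : seq C) m :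
  0 < #|C| -> #|C| * m <= size s -> exists c0, m <= count_mem c0 s.
Proof.
move=> Cp Hs; case: m Hs => [|m] Hs.
  by case/card_gt0P: Cp => x _; exists x.
have [c0 Hc0 | H] := pickP (fun c0 => m.+1 <= count_mem c0 s); first by exists c0.
have : size s <= #|C| * m.
  rewrite -sum_count_size -sum_nat_const; apply: leq_sum => i _.
  by have := H i => /= /negbT; rewrite -ltnNge ltnS.
move=> H'; have := leq_trans Hs H'; by rewrite leq_pmul2l // ltnn.
Qed.

Fixpoint good (T : eqType) (C : Type) (c : seq T -> C) s (ps : seq (T * C)) : Prop :=
  match ps with
  | [::] => True
  | p :: ps' => (forall t, subseq t (map fst ps') -> size t = s -> c (p.1 :: t) = p.2)
                /\ good c s ps'
  end.

Lemma good_filter (T : eqType) (C : eqType) (c : seq T -> C) s ps c0 :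
  good c s ps -> forall x t, subseq (x :: t) (map fst [seq p <- ps | p.2 == c0]) ->
  size t = s -> c (x :: t) = c0.
Proof.
elim: ps => [|[y col] ps IH] //= [Hy Hg] x t.
case: eqP => [Ec|_] /=; last exact: IH.
case: eqP => [->|_]; last exact: IH.
move=> Hsub Hsz; rewrite -Ec; apply: Hy => //; apply: subseq_trans Hsub _.
exact/map_subseq/filter_subseq.
Qed.

Definition RamseyP s m (C : finType) :=
  exists N, forall (T : eqType) (c : seq T -> C) (S : seq T), N <= size S ->
    exists H, [/\ subseq H S, size H = m &
      exists c0, forall t, subseq t H -> size t = s -> c t = c0].

Lemma ramsey s : forall m (C : finType), RamseyP s m C.
Proof.
elim: s => [|s IHs] m C.
  exists m => T c S HS; exists (take m S); split.
  - exact: take_subseq.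
  - by rewrite size_take; case: ltngtP HS.
  - by exists (c [::]) => t _ /size0nil ->.
have step : forall L, exists N, forall (T : eqType) (c : seq T -> C) (S : seq T),
    N <= size S -> exists ps : seq (T * C),
      [/\ size ps = L, subseq (map fst ps) S & good c s ps].
  elim=> [|L [NL IHL]].
    by exists 0 => T c S _; exists [::]; split; rewrite ?sub0seq.
  have [N' HN'] := IHs NL C.
  exists N'.+1 => T c [|x S] //= HS.
  have [H [HH1 HH2 [c0 Hc0]]] := HN' T (fun t => c (x :: t)) S HS.
  have [ps [Hp1 Hp2 Hp3]] := IHL T c H (eq_leq (esym HH2)).
  exists ((x, c0) :: ps); split => /=.
  - by rewrite Hp1.
  - by rewrite eqxx; apply: subseq_trans HH1.
  - split=> // t Ht Hs; apply: Hc0 => //; exact: subseq_trans Ht Hp2.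
have [N HN] := step (#|C| * m).
exists N => T c S HS.
have [ps [Hp1 Hp2 Hp3]] := HN T c S HS.
have Cp : 0 < #|C| by apply/card_gt0P; exists (c [::]).
have Hsz : #|C| * m <= size (map snd ps) by rewrite size_map Hp1.
have [c0 Hc0] := pigeon Cp Hsz.
set F := map fst [seq p <- ps | p.2 == c0].
have HF : m <= size F.
  by rewrite size_map size_filter; move: Hc0; rewrite count_map.
exists (take m F); split.
- apply: subseq_trans (take_subseq _ _) _; apply: subseq_trans Hp2.
  exact/map_subseq/filter_subseq.
- by rewrite size_take; case: ltngtP HF.
- exists c0 => [[|x t]] // Ht [Hs]; apply: good_filter Hp3 _ _ _ Hs.
  exact: subseq_trans Ht (take_subseq _ _).
Qed.
Section G.
Variables (k a : nat) (P xs : seq nat).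
Hypotheses (sP : sorted ltn P) (sX : sorted ltn xs) (szP : size P = size xs)
  (aP : all (fun i => i < k) P) (aX : all (fun j => j < a) xs).

Definition lc i := count (fun p => p <= i) P.
Definition base j := k + j * k.+1.
Definition g i := if lc i == 0 then i else
  if i \in P then base (nth 0 xs (lc i).-1) else base (nth 0 xs (lc i).-1) + i.+1.

Lemma lc_size i : lc i <= size P.
Proof. exact: count_size. Qed.

Lemma lc_mono i i' : i <= i' -> lc i <= lc i'.
Proof. by move=> H; apply: sub_count => p /= Hp; apply: leq_trans Hp H. Qed.

Lemma lc_strict i i' : i < i' -> i' \in P -> lc i < lc i'.
Proof.
move=> Hi Hin.
have := count_predUI (fun p => p <= i) (pred1 i') P.
have -> : count (predI (fun p => p <= i) (pred1 i')) P = 0.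
  apply/eqP; rewrite -leqn0 leqNgt -has_count; apply/hasP => -[p _ /= /andP [H1 /eqP H2]].
  by subst p; rewrite leqNgt Hi in H1.
have H1 : 0 < count (pred1 i') P by rewrite -has_count has_pred1.
have H2 : count (predU (fun p => p <= i) (pred1 i')) P <= lc i'.
  by apply: sub_count => p /= /orP [H|/eqP ->] //; apply: leq_trans H (ltnW Hi).
rewrite addn0 => E; rewrite E in H2; apply: leq_trans H2; by rewrite -addn1 leq_add2l.
Qed.

Lemma nthX_lt i : 0 < lc i -> nth 0 xs (lc i).-1 < a.
Proof.
move=> H; have Hs : (lc i).-1 < size xs by have := lc_size i; lia.
by move/allP: aX; apply; exact: mem_nth.
Qed.

Lemma g_bound i : i < k -> g i < k + a * k.+1.
Proof.
move=> Hi; rewrite /g; case: eqP => H0; first lia.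
have := nthX_lt (i := i); rewrite /base; case: (i \in P); nia.
Qed.

Lemma g_mono i i' : i < i' -> i' < k -> g i < g i'.
Proof.
move=> Hi Hi'; rewrite /g.
have Hm := lc_mono (ltnW Hi).
case: eqP => H0; case: eqP => H0'.
- by [].
- have := nthX_lt (i := i'); case: (i' \in P); rewrite /base; nia.
- lia.
have Hl1 := nthX_lt (i := i); have Hl2 := nthX_lt (i := i').
case: (ltngtP (lc i) (lc i')) => Hc; last first.
- rewrite Hc. case Hin': (i' \in P).
    by have := lc_strict Hi Hin'; lia.
  case: (i \in P); lia.
- lia.
have Hj : nth 0 xs (lc i).-1 < nth 0 xs (lc i').-1.
  apply: (sorted_ltn_nth ltn_trans) => //; rewrite ?inE; have := lc_size i';
  have := lc_size i; lia.
case: (i \in P); case: (i' \in P); rewrite /base; nia.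
Qed.

Lemma cnt_nth (Q : seq nat) l : sorted ltn Q -> l < size Q ->
  count (fun p => p <= nth 0 Q l) Q = l.+1.
Proof.
elim: Q l => [|q Q IH] l //= sQ.
have hQ := order_path_min ltn_trans sQ.
have sQ' := path_sorted sQ.
case: l => [|l] /= Hl.
  rewrite leqnn (eq_in_count (a2 := pred0)) ?count_pred0 //.
  by move=> p Hp /=; move/allP: hQ => /(_ p Hp) H; rewrite leqNgt H.
rewrite IH //.
have : nth 0 Q l \in Q by apply: mem_nth.
by move/allP: hQ => Hq /Hq /ltnW ->.
Qed.

Lemma g_nthP l : l < size P -> g (nth 0 P l) = base (nth 0 xs l).
Proof.
move=> Hl; rewrite /g /lc cnt_nth // mem_nth //.
Qed.

Lemma g_base i j : i < k -> g i = base j ->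
  [/\ i \in P, 0 < lc i & j = nth 0 xs (lc i).-1].
Proof.
move=> Hi; rewrite /g /base; case: eqP => H0; first lia.
case: (boolP (i \in P)) => Hin.
  move=> /eqP; rewrite eqn_add2l eqn_mul2r /= => /eqP ->; split=> //; lia.
move=> E; exfalso.
set j0 := nth 0 xs (lc i).-1 in E.
case: (leqP j j0) => Hj; nia.
Qed.

End G.
Section Main.
Variables (a b : nat).
Let k := b.*2.+1.
Let m := k + a * k.+1.
Variables (n : nat) (Hmn : m < n) (c : coloring n k).
Let x0 : 'I_n := Ordinal (ltn_trans (ltn_addr _ (ltn0Sn _)) Hmn).

Definition col (x : 'I_n) (t : seq 'I_n) : bool :=
  match insub [set y in t] : option (ksub n k) with
  | Some K => match insub (x, K) : option (Bedge n k) with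
              | Some e => c e | None => false end
  | None => false end.

Lemma col_edge (e : Bedge n k) t : [set y in t] = val (val e).2 -> col (val e).1 t = c e.
Proof.
move=> Et; rewrite /col; case: insubP => [K _ EK | Hn]; last first.
  by move: Hn; rewrite Et (valP (val e).2).
have -> : K = (val e).2 by apply: val_inj; rewrite EK.
case: insubP => [e' _ Ee' | Hn]; last by move: Hn; rewrite -surjective_pairing (valP e).
by congr c; apply: val_inj; rewrite Ee' -surjective_pairing.
Qed.

Definition pat (t : seq 'I_n) : {ffun 'I_k -> bool} :=
  [ffun i : 'I_k => col (nth x0 t i) t].

Variables (H : seq 'I_n) (uH : uniq H) (szH : size H = m) (p : {ffun 'I_k -> bool})
  (hom : forall t, subseq t H -> size t = k -> pat t = p).
Variables (cc : bool) (Pl : seq nat) (sPl : sorted ltn Pl) (szPl : size Pl = b)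
  (aPl : all (fun i => i < k) Pl)
  (cPl : forall i (Hi : i < k), i \in Pl -> p (Ordinal Hi) = cc).

Definition xs (X : ksub a b) : seq nat := map val (enum (val X)).

Lemma xs_sorted (X : ksub a b) : sorted ltn (xs X).
Proof.
apply: (subseq_sorted ltn_trans (s2 := iota 0 a)); last exact: iota_ltn_sorted.
rewrite -val_enum_ord; apply: map_subseq; rewrite enumT /enum_mem.
exact: filter_subseq.
Qed.

Lemma xs_size (X : ksub a b) : size (xs X) = b.
Proof. by rewrite size_map -cardE; apply/eqP; exact: (valP X). Qed.

Lemma xs_all (X : ksub a b) : all (fun j => j < a) (xs X).
Proof. by apply/allP => j /mapP [y _ ->]; exact: ltn_ord. Qed.

Lemma mem_xs (X : ksub a b) (j : 'I_a) : (val j \in xs X) = (j \in val X).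
Proof. by rewrite (mem_map val_inj) mem_enum. Qed.

Let szP X : size Pl = size (xs X). Proof. by rewrite xs_size. Qed.

Definition gX (X : ksub a b) := g k Pl (xs X).
Definition gl (X : ksub a b) := map (gX X) (iota 0 k).
Definition tX (X : ksub a b) := map (nth x0 H) (gl X).
Definition Y (j : 'I_a) := nth x0 H (base k j).

Lemma gl_sorted (X : ksub a b) : sorted ltn (gl X).
Proof.
apply: (homo_sorted_in (P := fun i => i < k)); last exact: iota_ltn_sorted.
  move=> i j _ Hj /= Hij; apply: (g_mono (a := a)) => //; [exact: xs_sorted | exact: xs_all].
by apply/allP => i; rewrite mem_iota.
Qed.

Lemma gl_lt (X : ksub a b) i : i \in gl X -> i < m.
Proof.
case/mapP => i0; rewrite mem_iota /= => Hi ->.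
apply: (g_bound (a := a)) => //; [exact: xs_sorted | exact: xs_all].
Qed.

Lemma tX_sub (X : ksub a b) : subseq (tX X) H.
Proof.
have E : gl X = [seq i <- iota 0 m | i \in gl X].
  apply: (irr_sorted_eq ltn_trans ltnn) => //.
  - exact: gl_sorted.
  - exact: (sorted_filter ltn_trans _ (iota_ltn_sorted _ _)).
  - move=> i; rewrite mem_filter mem_iota /=.
    by case Hi: (i \in gl X); rewrite ?andbF // (gl_lt Hi).
rewrite /tX E -{2}(mkseq_nth x0 H) szH; apply: map_subseq; exact: filter_subseq.
Qed.

Lemma tX_size (X : ksub a b) : size (tX X) = k.
Proof. by rewrite !size_map size_iota. Qed.

Lemma tX_uniq (X : ksub a b) : uniq (tX X).
Proof. exact: subseq_uniq (tX_sub X) uH. Qed.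

Lemma base_lt (j : 'I_a) : base k j < m.
Proof. have := ltn_ord j; rewrite /base /m; nia. Qed.

Lemma baseP (X : ksub a b) (j : 'I_a) : j \in val X ->
  exists2 i, i < k & gX X i = base k j /\ i \in Pl.
Proof.
rewrite -mem_xs => Hj.
set l := index (val j) (xs X).
have Hl : l < size (xs X) by rewrite index_mem.
exists (nth 0 Pl l).
  by move/allP: aPl; apply; apply: mem_nth; rewrite (szP X).
split; last by apply: mem_nth; rewrite (szP X).
by rewrite /gX g_nthP ?nth_index // (szP X).
Qed.

Lemma Y_in (X : ksub a b) (j : 'I_a) : (Y j \in tX X) = (j \in val X).
Proof.
apply/idP/idP.
  case/mapP => i0 Hi0 /eqP; have Hm0 := gl_lt Hi0.
  rewrite /Y nth_uniq ?szH ?base_lt // => /eqP E.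
  case/mapP: Hi0 => i; rewrite mem_iota /= => Hi E2.
  have [Hin Hpos Ej] := g_base sPl (xs_sorted X) (szP X) aPl (xs_all X) Hi (esym (etrans E E2)).
  rewrite -mem_xs; change (nat_of_ord j \in xs X); rewrite Ej mem_nth //.
  have := lc_size Pl i; rewrite (szP X); move: Hpos; by case: (lc Pl i).
case/baseP => i Hi [Hg _]; apply/mapP; exists (base k j) => //.
by rewrite -Hg; apply: map_f; rewrite mem_iota.
Qed.

Lemma Y_col (X : ksub a b) (j : 'I_a) : j \in val X -> col (Y j) (tX X) = cc.
Proof.
case/baseP => i Hi [Hg HP].
have := hom (tX_sub X) (tX_size X) => /ffunP /(_ (Ordinal Hi)).
rewrite ffunE cPl //= => <-; congr col.
rewrite /tX (nth_map 0) ?size_map ?size_iota // /gl (nth_map 0) ?size_iota //.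
by rewrite nth_iota // add0n Hg.
Qed.

Lemma cardX (X : ksub a b) : #|[set y in tX X]| == k.
Proof. by rewrite cardsE (card_uniqP (tX_uniq X)) tX_size. Qed.

Definition KX (X : ksub a b) : ksub n k := Sub [set y in tX X] (cardX X).

Definition fB (v : Bvert a b) : Bvert n k :=
  match v with inl j => inl (Y j) | inr X => inr (KX X) end.

Lemma final : exists V' : {set Bvert n k}, induced_copy a b V' /\ monochromatic c V'.
Proof.
exists [set v | [exists u, fB u == v]]; split.
  exists fB; split.
  - move=> [j|X] [j'|X'] //= [E].
      congr inl; apply: val_inj; move/eqP: E.
      rewrite /Y nth_uniq ?szH ?base_lt // /base => /eqP E.
      by apply/eqP; rewrite -(eqn_pmul2r (ltn0Sn k)) -(eqn_add2l k) E.
    congr inr; apply: val_inj; apply/setP => j.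
    have E2 : (Y j \in [set y in tX X]) = (Y j \in [set y in tX X']) by rewrite E.
    by rewrite !in_set !Y_in in E2.
  - move=> v; rewrite inE; split => [/existsP [u /eqP]|[u <-]]; first by exists u.
    by apply/existsP; exists u.
  - by move=> [j|X] [j'|X'] //=; rewrite in_set Y_in.
exists cc => e; rewrite /edge_l /edge_r !inE.
move=> /existsP [[j|X] //= /eqP [Ej]] /existsP [[j'|X] //= /eqP [EX]].
have Hin := valP e; rewrite /= -Ej -EX /= inE Y_in in Hin.
rewrite -(col_edge (t := tX X)); last by rewrite -EX.
rewrite -Ej; exact: Y_col.
Qed.

End Main.

Theorem mainTheorem2 (a b : nat) : b <= a ->
  exists n k : nat, k <= n /\
    forall c : coloring n k,
      exists V' : {set Bvert n k}, induced_copy a b V' /\ monochromatic c V'.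
Proof.
move=> Hba.
pose k := b.*2.+1. pose m := k + a * k.+1.
have [N HN] := ramsey k m {ffun 'I_k -> bool}.
exists (N + m).+1, k; split; first by rewrite /m; lia.
move=> c.
have Hmn : m < (N + m).+1 by lia.
have Hsz : N <= size (enum 'I_(N + m).+1) by rewrite size_enum_ord; lia.
have [H [HsH szH [p hom]]] := HN _ (pat Hmn c) _ Hsz.
have uH : uniq H := subseq_uniq HsH (enum_uniq _).
pose q i := p (inord i).
have [cc Hcc] : exists cc, b <= count (fun i => q i == cc) (iota 0 k).
  have Ht := count_predC (fun i => q i) (iota 0 k); rewrite size_iota in Ht.
  have E1 : count (fun i => q i == true) (iota 0 k) = count (fun i => q i) (iota 0 k).
    by apply: eq_count => i; rewrite /q /=; case: (p _).
  have E2 : count (fun i => q i == false) (iota 0 k) = count (predC (fun i => q i)) (iota 0 k).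
    by apply: eq_count => i; rewrite /q /=; case: (p _).
  case: (leqP b (count (fun i => q i) (iota 0 k))) => Hb.
    by exists true; rewrite E1.
  exists false; rewrite E2.
  move: Ht Hb; rewrite /k; set u := count _ _; set v := count _ _; lia.
pose Pl := take b [seq i <- iota 0 k | q i == cc].
have sPl : sorted ltn Pl by apply/take_sorted/(sorted_filter ltn_trans)/iota_ltn_sorted.
have szPl : size Pl = b by rewrite size_take size_filter; case: ltngtP Hcc.
have memP i : i \in Pl -> i < k /\ q i = cc.
  by move/mem_take; rewrite mem_filter mem_iota => /andP [/eqP -> /andP [_ ->]].
have aPl : all (fun i => i < k) Pl by apply/allP => i /memP [].
have cPl : forall i (Hi : i < k), i \in Pl -> p (Ordinal Hi) = cc.
  move=> i Hi /memP [_ <-]; rewrite /q.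
  have -> : (inord i : 'I_k) = Ordinal Hi by apply: val_inj; rewrite /= inordK.
  by [].
exact: (final uH szH hom sPl szPl aPl cPl).
Qed.
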